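(* Let $V$ be a simple Yetter-Drinfeld module over $H=B(n,w,\gamma)$ with $\dim_\Bbbk V=p+1$ for some $p\ge0$, and let $v\in V$ be a standard element of type $(\alpha,\beta,x^rg^i)$ with $\alpha,\beta\in\Bbbk^*$, $r,i\in\mathbb{Z}$. If $u$ is any standard element of $V$, then $u=\lambda v$ for some $\lambda\in\Bbbk^*$.
   Context: $\Bbbk$ is an algebraically closed field of characteristic $0$; $n,w$ positive integers, $\gamma$ a primitive $n$-th root of unity. $H=B(n,w,\gamma)$ is the Hopf algebra generated by $x^{\pm1},g,y$ with relations $xx^{-1}=x^{-1}x=1$, $xg=gx$, $xy=yx$, $yg=\gamma gy$, $y^n=1-x^w=1-g^n$, with $\Delta(x)=x\otimes x$, $\Delta(g)=g\otimes g$, $\Delta(y)=y\otimes g+1\otimes y$, $\varepsilon(x)=\varepsilon(g)=1$, $\varepsilon(y)=0$, $S(x)=x^{-1}$, $S(g)=g^{-1}$, $S(y)=-yg^{-1}$; $G(H)=\{g^jx^k\}$. A (left-left) Yetter-Drinfeld module is a left $H$-module, left $H$-comodule $(V,\cdot,\delta)$ with $\delta(h\cdot v)=h_{(1)}v_{(-1)}S(h_{(3)})\otimes h_{(2)}\cdot v_{(0)}$; simple means no nonzero proper Yetter-Drinfeld submodules. A nonzero $v\in V$ is a standard element of type $(\alpha,\beta,h)$ if $h\in G(H)$, $\alpha,\beta\in\Bbbk^*$, $x\cdot v=\alpha v$, $g\cdot v=\beta v$, $\delta(v)=h\otimes v$. *)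

(* Defs.v *)
(* The Hopf algebra H = B(n,w,gamma) is encoded through its
   PBW-type basis x^k g^j y^l (k : int, 0 <= j < n, 0 <= l < n); elements of
   H, H(x)H, H(x)H(x)H are formal linear combinations (seq of coefficient *
   basis index), all products being computed literally from the defining
   relations and reduced to this normal form. *)
From HB Require Import structures.
From mathcomp Require Import all_boot all_order all_algebra.
Set Implicit Arguments. Unset Strict Implicit. Unset Printing Implicit Defensive.
Import GRing.Theory.
Local Open Scope ring_scope.

Section Bnwgamma.
Variables (K : fieldType) (n w : nat) (gamma : K).

(* (k, j, l) stands for x^k g^j y^l *)
Definition bas := (int * int * nat)%type.
Definition bas_normal (b : bas) : bool :=
  (0 <= b.1.2) && (b.1.2 < n%:Z) && (b.2 < n)%N.

(* normal form of the grouplike x^k g^i  (uses g^n = x^w) *)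
Definition gl (k i : int) : int * int :=
  (k + (i %/ n%:Z)%Z * w%:Z, (i %% n%:Z)%Z).

Definition lc := seq (K * bas).

(* c x^k g^i y^l, reduced, for l < 2n (uses y^n = 1 - x^w, x central) *)
Definition mono (c : K) (k i : int) (l : nat) : lc :=
  let kj := gl k i in
  if (l < n)%N then [:: (c, (kj, l))]
  else [:: (c, (kj, (l - n)%N)); (- c, ((kj.1 + w%:Z, kj.2), (l - n)%N))].

(* product of two normal basis elements, using y g = gamma g y *)
Definition mulB (b1 b2 : bas) : lc :=
  mono (gamma ^+ (b1.2 * `|b2.1.2|)%N) (b1.1.1 + b2.1.1) (b1.1.2 + b2.1.2)
       (b1.2 + b2.2).

Definition lc_mul (s t : lc) : lc :=
  flatten [seq [seq (p.1 * q.1 * r.1, r.2) | r <- mulB p.2 q.2] | p <- s, q <- t].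
Definition lc_scale (a : K) (s : lc) : lc := [seq (a * p.1, p.2) | p <- s].
Definition lc_basis (b : bas) : lc := [:: (1, b)].
Definition bas1 : bas := ((0, 0), 0%N).
Definition lc_one : lc := lc_basis bas1.
Definition lc_x : lc := mono 1 1 0 0.
Definition lc_xinv : lc := mono 1 (-1) 0 0.
Definition lc_g : lc := mono 1 0 1 0.
Definition lc_ginv : lc := mono 1 0 (-1) 0.
Definition lc_y : lc := mono 1 0 0 1.
Definition lc_pow (s : lc) (m : nat) : lc := iter m (fun t => lc_mul t s) lc_one.
Definition lc_powz (s sinv : lc) (k : int) : lc :=
  match k with Posz m => lc_pow s m | Negz m => lc_pow sinv m.+1 end.

(* antipode: S(x) = x^-1, S(x^-1) = x, S(g) = g^-1, S(y) = - y g^-1,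
   extended as an anti-algebra map to x^k g^j y^l *)
Definition lc_Sy : lc := lc_scale (-1) (lc_mul lc_y lc_ginv).
Definition antipodeB (b : bas) : lc :=
  lc_mul (lc_mul (lc_pow lc_Sy b.2) (lc_powz lc_ginv lc_g b.1.2))
         (lc_powz lc_xinv lc_x b.1.1).

Definition epsB (b : bas) : K := if b.2 == 0%N then 1 else 0.

Definition lc2 := seq (K * (bas * bas)).
Definition lc2_mul (s t : lc2) : lc2 :=
  flatten [seq flatten [seq [seq (p.1 * q.1 * r1.1 * r2.1, (r1.2, r2.2))
                               | r2 <- mulB p.2.2 q.2.2]
                          | r1 <- mulB p.2.1 q.2.1] | p <- s, q <- t].
Definition lc_tens (s t : lc) : lc2 := [seq (a.1 * b.1, (a.2, b.2)) | a <- s, b <- t].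
Definition lc2_one : lc2 := lc_tens lc_one lc_one.
Definition lc2_pow (s : lc2) (m : nat) : lc2 := iter m (fun t => lc2_mul t s) lc2_one.
Definition lc2_powz (s sinv : lc2) (k : int) : lc2 :=
  match k with Posz m => lc2_pow s m | Negz m => lc2_pow sinv m.+1 end.

Definition Delta_x : lc2 := lc_tens lc_x lc_x.
Definition Delta_xinv : lc2 := lc_tens lc_xinv lc_xinv.
Definition Delta_g : lc2 := lc_tens lc_g lc_g.
Definition Delta_ginv : lc2 := lc_tens lc_ginv lc_ginv.
Definition Delta_y : lc2 := lc_tens lc_y lc_g ++ lc_tens lc_one lc_y.
Definition DeltaB (b : bas) : lc2 :=
  lc2_mul (lc2_mul (lc2_powz Delta_x Delta_xinv b.1.1)
                   (lc2_powz Delta_g Delta_ginv b.1.2))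
          (lc2_pow Delta_y b.2).
(* Delta^(2) = (Delta (x) id) o Delta, on the basis; result in H(x)H(x)H *)
Definition Delta2B (b : bas) : seq (K * (bas * bas * bas)) :=
  flatten [seq [seq (p.1 * q.1, (q.2.1, q.2.2, p.2.2)) | q <- DeltaB p.2.1]
          | p <- DeltaB b].

Definition grouplike (b : bas) : bool := bas_normal b && (b.2 == 0%N).

Section YD.
Variable V : vectType K.

(* Data of a left H-module and left H-comodule on V:
   - the module is given by the actions of the generators x, x^-1, g, y
     (H is defined by generators and relations);
   - the coaction is delta(v) = sum_b e_b (x) coact b v, where e_b is the
     basis element with index b and coact b v = 0 for b outside supp. *)
Record YDdata := {
  opX : 'End(V); opXi : 'End(V); opG : 'End(V); opY : 'End(V);
  coact : bas -> 'End(V);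
  supp : seq bas }.

Variable M : YDdata.

Definition iterz (f fi : V -> V) (k : int) (v : V) : V :=
  match k with Posz m => iter m f v | Negz m => iter m.+1 fi v end.

(* action of the basis element x^k g^j y^l (j >= 0) *)
Definition actB (b : bas) (v : V) : V :=
  iterz (opX M) (opXi M) b.1.1 (iter `|b.1.2|%N (opG M) (iter b.2 (opY M) v)).

Definition is_module : Prop :=
  forall v : V,
  [/\ opX M (opXi M v) = v, opXi M (opX M v) = v,
      opX M (opG M v) = opG M (opX M v) & opX M (opY M v) = opY M (opX M v)] /\
  [/\ opY M (opG M v) = gamma *: opG M (opY M v),
      iter n (opY M) v = v - iter w (opX M) v &
      iter n (opG M) v = iter w (opX M) v].

Definition is_comodule : Prop :=
  [/\ uniq (supp M),
      forall b, b \in supp M -> bas_normal b,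
      forall b v, b \notin supp M -> coact M b v = 0,
      (* (eps (x) id) o delta = id *)
      forall v, \sum_(b <- supp M) epsB b *: coact M b v = v &
      (* (Delta (x) id) o delta = (id (x) delta) o delta, compared
         coefficientwise at e_b1 (x) e_b2 *)
      forall v b1 b2,
        \sum_(b <- supp M) \sum_(q <- DeltaB b)
            (if q.2 == (b1, b2) then q.1 else 0) *: coact M b v
        = coact M b2 (coact M b1 v)].

(* delta(h.v) = h1 v(-1) S(h3) (x) h2.v(0), for every basis element h,
   compared coefficientwise at e_b0 *)
Definition is_YD_compatible : Prop :=
  forall (h : bas) (v : V) (b0 : bas), bas_normal h ->
    coact M b0 (actB h v) =
    \sum_(t <- Delta2B h) \sum_(b' <- supp M)
      \sum_(r <- lc_mul (lc_mul (lc_basis t.2.1.1) (lc_basis b')) (antipodeB t.2.2))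
        (if r.2 == b0 then t.1 * r.1 else 0) *: actB t.2.1.2 (coact M b' v).

Definition is_YDmodule : Prop := [/\ is_module, is_comodule & is_YD_compatible].

Definition YD_submodule (U : {vspace V}) : Prop :=
  (forall b u, bas_normal b -> u \in U -> actB b u \in U) /\
  (forall b u, u \in U -> coact M b u \in U).

Definition YD_simple : Prop :=
  {:V}%VS != 0%VS /\
  forall U : {vspace V}, YD_submodule U -> U = 0%VS \/ U = fullv.

Definition standard (v : V) (alpha beta : K) (h : bas) : Prop :=
  [/\ v != 0, grouplike h, alpha != 0 & beta != 0] /\
  [/\ opX M v = alpha *: v, opG M v = beta *: v &
      forall b, coact M b v = (if b == h then v else 0)].

End YD.
End Bnwgamma.

(* Main.v *)
Require Import Defs.
From HB Require Import structures.
From mathcomp Require Import all_boot all_order all_algebra.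
From mathcomp Require Import zify ring.
Set Implicit Arguments. Unset Strict Implicit. Unset Printing Implicit Defensive.
Import GRing.Theory.
Local Open Scope ring_scope.

Section S.
Variables (K : fieldType) (n w : nat) (gamma : K).
Hypothesis n1 : (1 < n)%N.

Lemma n0 : (0 < n)%N. Proof. exact: ltnW. Qed.

Lemma gl_small k (i : int) : 0 <= i < n%:Z -> gl n w k i = (k, i).
Proof.
move=> H; rewrite /gl divz_small ?modz_small //.
by rewrite mul0r addr0.
Qed.

Lemma mono_lt (c : K) k i l : (l < n)%N -> mono n w c k i l = [:: (c, (gl n w k i, l))].
Proof. by move=> H; rewrite /mono H. Qed.

Lemma mulB_lt (b1 b2 : bas) : (b1.2 + b2.2 < n)%N ->
  mulB n w gamma b1 b2 = [:: (gamma ^+ (b1.2 * `|b2.1.2|), (gl n w (b1.1.1 + b2.1.1) (b1.1.2 + b2.1.2), (b1.2 + b2.2)%N))].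
Proof. by move=> H; rewrite /mulB mono_lt. Qed.

Definition yB : bas := ((0, 0), 1%N).
Definition gB : bas := ((0, 1), 0%N).

Lemma mulB1l (b : bas) : bas_normal n b -> mulB n w gamma bas1 b = [:: (1, b)].
Proof.
case: b => [[k j] l] /andP[/andP[j0 jn] ln].
rewrite mulB_lt //= gl_small ?add0r ?j0 //= mul0n expr0 add0n.
Qed.

Lemma mulB1r (b : bas) : bas_normal n b -> mulB n w gamma b bas1 = [:: (1, b)].
Proof.
case: b => [[k j] l] /andP[/andP[j0 jn] ln].
by rewrite mulB_lt ?addn0 //= gl_small ?addr0 ?j0 //= muln0 expr0.
Qed.

Lemma lc_y_eq : lc_y K n w = [:: (1, yB)].
Proof. by rewrite /lc_y mono_lt // gl_small //= ltz_nat n0. Qed.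
Lemma lc_g_eq : lc_g K n w = [:: (1, gB)].
Proof. by rewrite /lc_g mono_lt ?n0 // gl_small. Qed.
Lemma lc2_one_eq : lc2_one K = [:: (1, (bas1, bas1))].
Proof. by rewrite /lc2_one /lc_tens /= mulr1. Qed.
Lemma Delta_y_eq : Delta_y K n w = [:: (1, (yB, gB)); (1, (bas1, yB))].
Proof. by rewrite /Delta_y lc_y_eq lc_g_eq /lc_tens /lc_one /lc_basis /= !mulr1. Qed.

Definition lc2_normal (s : lc2 K) := all (fun p => bas_normal n p.2.1 && bas_normal n p.2.2) s.

Lemma lc2_mul1l s : lc2_normal s -> lc2_mul n w gamma (lc2_one K) s = s.
Proof.
rewrite lc2_one_eq; elim: s => [|[c [b1 b2]] s IH] //= /andP[/andP[N1 N2] Ns].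
move: IH; rewrite /lc2_mul /= => IH.
by rewrite mulB1l // mulB1l //= IH // !mul1r !mulr1.
Qed.
Lemma lc2_mul1r s : lc2_normal s -> lc2_mul n w gamma s (lc2_one K) = s.
Proof.
rewrite lc2_one_eq; elim: s => [|[c [b1 b2]] s IH] //= /andP[/andP[N1 N2] Ns].
move: IH; rewrite /lc2_mul /= => IH.
by rewrite mulB1r // mulB1r //= IH // !mulr1.
Qed.

Lemma DeltaB_y : DeltaB n w gamma yB = [:: (1, (yB, gB)); (1, (bas1, yB))].
Proof.
have Ny : bas_normal n yB by rewrite /bas_normal /= ltz_nat n0 n1.
have Ng : bas_normal n gB by rewrite /bas_normal /= ltz_nat n1 n0.
have N1 : bas_normal n bas1 by rewrite /bas_normal /= ltz_nat n0.
rewrite /DeltaB /= lc2_mul1l ?lc2_one_eq /= ?N1 //.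
rewrite -lc2_one_eq lc2_mul1l ?lc2_one_eq /= ?N1 // -lc2_one_eq lc2_mul1l Delta_y_eq //=.
all: by rewrite ?Ny ?Ng ?N1.
Qed.

Lemma DeltaB_1 : DeltaB n w gamma bas1 = [:: (1, (bas1, bas1))].
Proof.
have N1 : bas_normal n bas1 by rewrite /bas_normal /= ltz_nat n0.
rewrite /DeltaB /= lc2_mul1l ?lc2_one_eq /= ?N1 //.
by rewrite -lc2_one_eq lc2_mul1l ?lc2_one_eq /= ?N1.
Qed.

Lemma Delta2B_y : Delta2B n w gamma yB =
  [:: (1, (yB, gB, gB)); (1, (bas1, yB, gB)); (1, (bas1, bas1, yB))].
Proof. by rewrite /Delta2B DeltaB_y /= DeltaB_y DeltaB_1 /= !mulr1. Qed.


Definition coefL (s : lc K) (b0 : bas) : K := \sum_(r <- s) (if r.2 == b0 then r.1 else 0).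

Variable V : vectType K.
Variable M : YDdata V.

Lemma sum_coefL (s : lc K) b0 (t : K) (X : V) :
  \sum_(r <- s) (if r.2 == b0 then t * r.1 else 0) *: X = (t * coefL s b0) *: X.
Proof.
rewrite /coefL -scaler_suml mulr_sumr; congr (_ *: _).
by apply: eq_bigr => r _; case: ifP; rewrite ?mulr0.
Qed.

Definition P1 b' := lc_mul n w gamma (lc_mul n w gamma (lc_basis K yB) (lc_basis K b')) (antipodeB n w gamma gB).
Definition P2 b' := lc_mul n w gamma (lc_mul n w gamma (lc_basis K bas1) (lc_basis K b')) (antipodeB n w gamma gB).
Definition P3 b' := lc_mul n w gamma (lc_mul n w gamma (lc_basis K bas1) (lc_basis K b')) (antipodeB n w gamma yB).

Lemma YD_y (HYD : is_YD_compatible n w gamma M) z b0 :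
  coact M b0 (opY M z) = \sum_(b' <- supp M)
    (coefL (P1 b') b0 *: opG M (coact M b' z) + coefL (P2 b') b0 *: opY M (coact M b' z)
     + coefL (P3 b') b0 *: coact M b' z).
Proof.
have Ny : bas_normal n yB by rewrite /bas_normal /= ltz_nat n0 n1.
have := HYD yB z b0 Ny.
rewrite /actB /= => ->.
rewrite Delta2B_y !big_cons big_nil addr0 -!big_split /=.
apply: eq_bigr => b' _.
by rewrite !sum_coefL !mul1r addrA.
Qed.

Definition sgb := gl n w 0 (-1).
Definition sgB : bas := (sgb, 0%N).
Definition syB : bas := (sgb, 1%N).

Lemma sgb_range : 0 <= sgb.2 < n%:Z.
Proof.
rewrite /sgb /gl /= modz_ge0 ?ltz_pmod // ?ltz_nat ?n0 //.
by rewrite eqz_nat -lt0n n0.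
Qed.

Definition lc_normal (s : lc K) := all (fun p => bas_normal n p.2) s.

Lemma lc_mul1l s : lc_normal s -> lc_mul n w gamma (lc_one K) s = s.
Proof.
rewrite /lc_one /lc_basis; elim: s => [|[c b] s IH] //= /andP[N Ns].
move: IH; rewrite /lc_mul /= => IH.
by rewrite mulB1l //= IH // mul1r mulr1.
Qed.
Lemma lc_mul1r s : lc_normal s -> lc_mul n w gamma s (lc_one K) = s.
Proof.
rewrite /lc_one /lc_basis; elim: s => [|[c b] s IH] //= /andP[N Ns].
move: IH; rewrite /lc_mul /= => IH.
by rewrite mulB1r //= IH // !mulr1.
Qed.

Lemma sgB_normal : bas_normal n sgB.
Proof. by rewrite /bas_normal /= sgb_range n0. Qed.
Lemma syB_normal : bas_normal n syB.
Proof. by rewrite /bas_normal /= sgb_range n1. Qed.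

Lemma lc_ginv_eq : lc_ginv K n w = [:: (1, sgB)].
Proof. by rewrite /lc_ginv mono_lt ?n0. Qed.

Lemma antipode_g : antipodeB n w gamma gB = [:: (1, sgB)].
Proof.
rewrite /antipodeB /= /lc_pow /= lc_ginv_eq lc_mul1l /= ?sgB_normal //.
rewrite (@lc_mul1l [:: (1, sgB)]) /= ?sgB_normal // lc_mul1r /= ?sgB_normal.
all: by rewrite ?(@lc_mul1l [:: (1, sgB)]) /= ?sgB_normal.
Qed.

Definition cy : K := - gamma ^+ `|sgb.2|.

Lemma lc_Sy_eq : lc_Sy n w gamma = [:: (cy, syB)].
Proof.
rewrite /lc_Sy lc_y_eq lc_ginv_eq /lc_mul /= mulB_lt /= ?addn0 //.
have R : 0 <= (-1 %% n)%Z < n by exact: sgb_range.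
rewrite /cy /syB /sgb !add0r gl_small // !mul1r mul1n mulN1r.
by rewrite /gl add0r.
Qed.

Lemma antipode_y : antipodeB n w gamma yB = [:: (cy, syB)].
Proof.
rewrite /antipodeB /= /lc_pow /= lc_Sy_eq.
by rewrite !(lc_mul1l, lc_mul1r) //= ?syB_normal.
Qed.

Definition Gb (b : bas) : bas := (gl n w (b.1.1 + sgb.1) (b.1.2 + sgb.2), b.2.+1).
Definition G2 (b : bas) : bas := (gl n w (b.1.1 + sgb.1) (b.1.2 + sgb.2), b.2).

Lemma P1_eq b : bas_normal n b -> (b.2.+1 < n)%N ->
  P1 b = [:: (gamma ^+ `|b.1.2| * gamma ^+ (b.2.+1 * `|sgb.2|), Gb b)].
Proof.
case: b => [[k j] l] /andP[/andP[j0 jn] ln] /= ln1.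
rewrite /P1 antipode_g /lc_mul /lc_basis /= mulB_lt //= add0r add0r gl_small ?j0 //=.
by rewrite mulB_lt //= ?addn0 // !mul1r mulr1 mul1n add1n.
Qed.

Lemma P2_eq b : bas_normal n b ->
  P2 b = [:: (gamma ^+ (b.2 * `|sgb.2|), G2 b)].
Proof.
case: b => [[k j] l] /andP[/andP[j0 jn] ln] /=.
rewrite /P2 antipode_g /lc_mul /lc_basis /= mulB1l ?/bas_normal ?j0 ?jn //=.
by rewrite mulB_lt //= ?addn0 // !mul1r.
Qed.

Lemma P3_eq b : bas_normal n b -> (b.2.+1 < n)%N ->
  P3 b = [:: (cy * gamma ^+ (b.2 * `|sgb.2|), Gb b)].
Proof.
case: b => [[k j] l] /andP[/andP[j0 jn] ln] /= ln1.
rewrite /P3 antipode_y /lc_mul /lc_basis /= mulB1l ?/bas_normal ?j0 ?jn //=.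
by rewrite mulB_lt //= ?addn1 // !mul1r.
Qed.

Lemma coefL1 (c : K) B b0 : coefL [:: (c, B)] b0 = if B == b0 then c else 0.
Proof. by rewrite /coefL big_cons big_nil addr0. Qed.

Variables (v : V) (beta : K).
Hypothesis gamma_n : gamma ^+ n = 1.
Hypothesis beta_n : beta ^+ n != 1.
Hypothesis Gv : opG M v = beta *: v.
Hypothesis vne : v != 0.
Hypothesis HYD : is_YDmodule n w gamma M.

Lemma pow_ne a b : gamma ^+ a * beta - gamma ^+ b != 0.
Proof.
rewrite subr_eq0; apply/negP => /eqP E.
have : (gamma ^+ a * beta) ^+ n = (gamma ^+ b) ^+ n by rewrite E.
rewrite exprMn -!exprM mulnC [(b * n)%N]mulnC !exprM gamma_n !expr1n mul1r => Eb.
by move: beta_n; rewrite Eb eqxx.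
Qed.

Definition Inv m z := exists f (k : K), [/\ k != 0, f.2 = m,
  (forall b, (m < b.2)%N -> coact M b z = 0) &
  (forall b, b.2 = m -> coact M b z = if b == f then k *: v else 0)].

Lemma Inv_step m z : Inv m z -> (m.+1 < n)%N -> Inv m.+1 (opY M z).
Proof.
case: HYD => _ [Huniq Hnorm Hout _ _] Hcomp.
move=> [f [k [kne f2 Hgt Heq]]] mn.
have Cf : coact M f z = k *: v by rewrite Heq // eqxx.
have fin : f \in supp M.
  apply/negPn/negP => nin; move: (Hout f z nin); rewrite Cf => /eqP.
  by rewrite scaler_eq0 (negPf kne) (negPf vne).
have fN := Hnorm _ fin.
set k' := (gamma ^+ `|f.1.2| * gamma ^+ (m.+1 * `|sgb.2|) * beta + cy * gamma ^+ (m * `|sgb.2|)) * k.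
have claim : forall b0, (m < b0.2)%N -> coact M b0 (opY M z) = if b0 == Gb f then k' *: v else 0.
  move=> b0 mb0.
  rewrite YD_y; last by case: HYD.
  rewrite (big_rem f) //= big_seq big1 ?addr0; last first.
    move=> b' b'in.
    have b'f : b' != f.
      apply/negP => /eqP E; move: b'in; rewrite E.
      by rewrite mem_rem_uniqF.
    have b'N : bas_normal n b' by apply: Hnorm; apply: (mem_rem b'in).
    case: (ltngtP b'.2 m) => hb.
    - have hb1 : (b'.2.+1 < n)%N by apply: (leq_trans _ (ltnW mn)); rewrite ltnS.
      rewrite P1_eq ?P2_eq ?P3_eq //.
      rewrite !coefL1.
      have -> : (Gb b' == b0) = false.
        by apply/negP => /eqP E; move: mb0; rewrite -E /= ltnNge hb.
      have -> : (G2 b' == b0) = false.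
        by apply/negP => /eqP E; move: mb0; rewrite -E /= ltnNge (ltnW hb).
      by rewrite !scale0r !addr0.
    - by rewrite Hgt // !linear0 !addr0.
    - by rewrite (Heq b' hb) (negPf b'f) !linear0 !addr0.
  have f21 : (f.2.+1 < n)%N by rewrite f2.
  rewrite P1_eq ?P2_eq ?P3_eq //.
  rewrite !coefL1 Cf.
  have -> : (G2 f == b0) = false.
    by apply/negP => /eqP E; move: mb0; rewrite -E /= f2 ltnn.
  rewrite scale0r addr0 linearZ /= Gv eq_sym.
  case: (b0 == Gb f); last by rewrite !scale0r addr0.
  rewrite /k' !scalerA -scalerDl; congr (_ *: _).
  by rewrite f2; ring.
exists (Gb f), k'; split.
- rewrite /k' mulf_neq0 // /cy mulNr -!exprD.
  exact: pow_ne.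
- by rewrite /Gb /= f2.
- move=> b hb; rewrite claim; last by apply: ltnW.
  case: eqP => // E; move: hb; rewrite E /Gb /= f2 ltnn //.
- by move=> b hb; rewrite claim // hb.
Qed.

Lemma Inv_iter h : h.2 = 0%N -> (forall b, coact M b v = if b == h then v else 0) ->
  forall m, (m < n)%N -> Inv m (iter m (opY M) v).
Proof.
move=> h2 Hh; elim=> [|m IH] mn.
- exists h, 1; split => //; first exact: oner_neq0.
  + move=> b hb; rewrite /= Hh; case: eqP => // E; move: hb; rewrite E h2 ltnn //.
  + by move=> b hb; rewrite /= Hh scale1r.
- by apply: Inv_step => //; apply: IH; apply: ltnW.
Qed.

End S.

Section G.
Variables (K : fieldType) (n w : nat) (gamma : K).
Variables (V : vectType K) (M : YDdata V).
Hypothesis n0 : (0 < n)%N.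
Hypothesis gprim : n.-primitive_root gamma.
Hypothesis Hmod : is_module n w gamma M.

Lemma gamma_n : gamma ^+ n = 1.
Proof. exact: prim_expr_order. Qed.

Lemma gamma_neq0 : gamma != 0.
Proof.
apply/negP => /eqP g0; have := gamma_n; rewrite g0 expr0n.
by case: n n0 => // m _ /eqP; rewrite eq_sym oner_eq0.
Qed.

Definition Z (x : V) k := iter k (opY M) x.
Definition Zs (x : V) := [seq Z x k | k <- iota 0 n].

Lemma Z_X x a : opX M x = a *: x -> forall k, opX M (Z x k) = a *: Z x k.
Proof.
move=> Hx; elim=> [|k IH] //=.
by case: (Hmod (Z x k)) => [[_ _ _ ->] _]; rewrite IH linearZ.
Qed.

Lemma Xi_eig x a : a != 0 -> opX M x = a *: x -> opXi M x = a^-1 *: x.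
Proof.
move=> a0 Hx; case: (Hmod x) => [[_ H2 _ _] _].
by rewrite -{2}H2 Hx linearZ scalerA mulVf // scale1r.
Qed.

Definition mu (b : K) k := b * gamma^-1 ^+ k.

Lemma Z_G x b : opG M x = b *: x -> forall k, opG M (Z x k) = mu b k *: Z x k.
Proof.
move=> Hx; elim=> [|k IH] /=; first by rewrite /mu expr0 mulr1.
case: (Hmod (Z x k)) => [_ [H _ _]].
have -> : opG M (opY M (Z x k)) = gamma^-1 *: opY M (opG M (Z x k)).
  by rewrite H scalerA mulVf ?gamma_neq0 // scale1r.
by rewrite IH linearZ scalerA /mu exprS; congr (_ *: _); ring.
Qed.

Lemma iterX x a : opX M x = a *: x -> forall k, iter k (opX M) x = a ^+ k *: x.
Proof.
move=> Hx; elim=> [|k IH] /=; first by rewrite scale1r.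
by rewrite IH linearZ /= Hx scalerA exprSr.
Qed.

Lemma Zn x a : opX M x = a *: x -> Z x n = (1 - a ^+ w) *: x.
Proof.
move=> Hx; case: (Hmod x) => [_ [_ H _]].
by rewrite /Z H (iterX Hx) scalerBl scale1r.
Qed.

Lemma span_closed (f : 'End(V)) (X : seq V) (U : {vspace V}) :
  (forall x, x \in X -> f x \in U) -> forall y, y \in <<X>>%VS -> f y \in U.
Proof.
move=> HX y; rewrite -[X]in_tupleE => /coord_span ->.
rewrite linear_sum; apply: memv_suml => i _; rewrite linearZ; apply: memvZ.
by apply: HX; rewrite -[X in _ \in X]in_tupleE mem_nth // size_tuple.
Qed.

Lemma Zs_nth x i : (i < n)%N -> (Zs x)`_i = Z x i.
Proof.
move=> lin; rewrite /Zs (nth_map 0%N) ?size_iota // nth_iota //.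
Qed.

Lemma Z_in x k : (k < n)%N -> Z x k \in <<Zs x>>%VS.
Proof. by move=> kn; apply: memv_span; apply: map_f; rewrite mem_iota. Qed.


Lemma Zs_mem x y : y \in Zs x -> exists2 k, (k < n)%N & y = Z x k.
Proof. by move=> /mapP[k]; rewrite mem_iota add0n => /andP[_ kn] ->; exists k. Qed.

Lemma iter_closed (f : 'End(V)) (U : {vspace V}) :
  (forall y, y \in U -> f y \in U) -> forall k y, y \in U -> iter k f y \in U.
Proof. by move=> H; elim=> [|k IH] y yU //=; apply: H; apply: IH. Qed.

Lemma iter_closedF (f : V -> V) (U : {vspace V}) :
  (forall y, y \in U -> f y \in U) -> forall k y, y \in U -> iter k f y \in U.
Proof. by move=> H; elim=> [|k IH] y yU //=; apply: H; apply: IH. Qed.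

Lemma span_full x a b h : is_YD_compatible n w gamma M -> YD_simple n M ->
  x != 0 -> a != 0 -> opX M x = a *: x -> opG M x = b *: x ->
  (forall b', coact M b' x = if b' == h then x else 0) -> <<Zs x>>%VS = fullv.
Proof.
move=> Hcomp [_ Hsimple] x0 a0 Xx Gx Cx.
set U := <<Zs x>>%VS.
have xU : x \in U by apply: (Z_in x n0).
have clX : forall y, y \in U -> opX M y \in U.
  apply: span_closed => y /Zs_mem[k kn ->].
  by rewrite (Z_X Xx) memvZ // Z_in.
have clXi : forall y, y \in U -> opXi M y \in U.
  apply: span_closed => y /Zs_mem[k kn ->].
  by rewrite (Xi_eig a0 (Z_X Xx k)) memvZ // Z_in.
have clG : forall y, y \in U -> opG M y \in U.
  apply: span_closed => y /Zs_mem[k kn ->].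
  by rewrite (Z_G Gx) memvZ // Z_in.
have clY : forall y, y \in U -> opY M y \in U.
  apply: span_closed => y /Zs_mem[k kn ->].
  have : (k.+1 < n)%N \/ k.+1 = n by move: kn; rewrite leq_eqVlt => /orP[/eqP|]; auto.
  case=> [k1|k1]; first by rewrite -[opY M _]/(Z x k.+1); apply: Z_in.
  by rewrite -[opY M _]/(Z x k.+1) k1 (Zn Xx) memvZ.
have clA : forall T y, y \in U -> actB M T y \in U.
  move=> [[k j] l] y yU; rewrite /actB /=.
  have H1 : iter `|j| (opG M) (iter l (opY M) y) \in U.
    by apply: iter_closed => //; apply: iter_closed.
  case: k => m /=; first exact: (iter_closedF clX).
  by apply: (clXi); exact: (iter_closedF clXi).
have clC : forall b0 y, y \in U -> coact M b0 y \in U.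
  move=> b0; apply: span_closed => y0 /Zs_mem[k kn ->].
  have -> : Z x k = actB M ((Posz 0, Posz 0), k) x by [].
  rewrite Hcomp; last by rewrite /bas_normal /= ltz_nat n0 kn.
  apply: memv_suml => t _; apply: memv_suml => b' _; apply: memv_suml => r _.
  apply: memvZ; apply: clA; rewrite Cx; case: ifP => _ //; exact: mem0v.
have sub : YD_submodule n M U by split => // b0 y _; apply: clA.
case: (Hsimple U sub) => // U0.
by move: xU; rewrite U0 memv0 (negPf x0).
Qed.


Definition Pg (s : seq K) (y : V) := foldr (fun m y => opG M y - m *: y) y s.

Lemma Pg_add s y1 y2 : Pg s (y1 + y2) = Pg s y1 + Pg s y2.
Proof.
elim: s => [|m s IH] //=; rewrite IH linearD scalerDr opprD.
by rewrite addrACA.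
Qed.
Lemma Pg_scale s (c : K) y : Pg s (c *: y) = c *: Pg s y.
Proof.
elim: s => [|m s IH] //=; rewrite IH linearZ scalerA mulrC -scalerA.
by rewrite scalerBr.
Qed.
Lemma Pg0 s : Pg s 0 = 0.
Proof. by have := Pg_scale s 0 0; rewrite !scale0r. Qed.
Lemma Pg_eig s y (l : K) : opG M y = l *: y -> Pg s y = (\prod_(m <- s) (l - m)) *: y.
Proof.
move=> Hy; elim: s => [|m s IH] /=; first by rewrite big_nil scale1r.
by rewrite IH linearZ /= Hy big_cons !scalerA -scalerBl; congr (_ *: _); ring.
Qed.

Lemma prod_zero (s : seq K) (l : K) : l \in s -> \prod_(m <- s) (l - m) = 0.
Proof. by move=> ls; rewrite (big_rem l) //= subrr mul0r. Qed.

Lemma mu_inj b i j : b != 0 -> (i < n)%N -> (j < n)%N -> mu b i = mu b j -> i = j.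
Proof.
move=> b0 ilt jlt; rewrite /mu !exprVn => /(mulfI b0)/invr_inj/eqP.
rewrite (eq_prim_root_expr gprim) => /eqP.
by rewrite !modn_small.
Qed.

Lemma mu0 b : mu b 0 = b.
Proof. by rewrite /mu expr0 mulr1. Qed.

Lemma decomp x b u c : b != 0 -> opG M x = b *: x -> u \in <<Zs x>>%VS ->
  opG M u = c *: u -> u != 0 -> exists l, exists d : K, (l < n)%N /\ u = d *: Z x l.
Proof.
move=> b0 Gx uin Gu u0.
have [l [ln Hl]] : exists l, (l < n)%N /\ forall k, (k < n)%N -> k != l -> c != mu b k.
  case: (boolP [exists k : 'I_n, c == mu b k]).
  - move=> /existsP[k /eqP ck]; exists k; split => // j jn jk; rewrite ck.
    apply/eqP => E; move: jk; rewrite (mu_inj b0 (ltn_ord k) jn E) eqxx //.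
  - move=> /existsPn H; exists 0%N; split => // j jn _; exact: (H (Ordinal jn)).
set s := [seq mu b k | k <- [seq k <- iota 0 n | k != l]].
have pi0 : \prod_(m <- s) (c - m) != 0.
  rewrite prodf_seq_neq0; apply/allP => m /mapP[k]; rewrite mem_filter mem_iota add0n.
  by move=> /andP[kl /andP[_ kn]] ->; rewrite /= subr_eq0 Hl.
have PU : Pg s u \in <[Z x l]>%VS.
  move: uin; rewrite -[Zs x]in_tupleE => /coord_span ->.
  rewrite (big_morph _ (Pg_add s) (Pg0 s)); apply: memv_suml => i _.
  rewrite Pg_scale; apply: memvZ.
  have isz : (i < n)%N by apply: (leq_trans (ltn_ord i)); rewrite /Zs size_map size_iota.
  rewrite in_tupleE Zs_nth // (Pg_eig _ (Z_G Gx i)).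
  case: (eqVneq (i : nat) l) => [->|il]; first by apply: memvZ; apply: memv_line.
  rewrite prod_zero ?scale0r ?mem0v //.
  by apply: map_f; rewrite mem_filter il mem_iota.
have : u = (\prod_(m <- s) (c - m))^-1 *: Pg s u.
  by rewrite (Pg_eig _ Gu) scalerA mulVf // scale1r.
move=> ->; move: PU => /vlineP[d ->]; rewrite scalerA.
by exists l, ((\prod_(m <- s) (c - m))^-1 * d).
Qed.


Lemma Z_scale y (c : K) k : Z (c *: y) k = c *: Z y k.
Proof. by elim: k => [|k IH] //=; rewrite IH linearZ. Qed.

Lemma Z_add y i l : Z (Z y l) i = Z y (i + l).
Proof. by rewrite /Z iterD. Qed.

Lemma Z_big x k : Z x n = 0 -> (n <= k)%N -> Z x k = 0.
Proof.
move=> Zn0 nk; rewrite -(subnK nk) /Z iterD -/(Z x n) Zn0.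
by elim: (k - n)%N => [|j IH] //=; rewrite IH linear0.
Qed.

Lemma no_other x b l (c : K) u : x != 0 -> b != 0 -> opG M x = b *: x ->
  Z x n = 0 -> (0 < l < n)%N -> u = c *: Z x l -> x \in <<Zs u>>%VS -> False.
Proof.
move=> x0 b0 Gx Zn0 /andP[l0 ln] ->.
rewrite -[Zs _]in_tupleE => /coord_span Ex.
set s := [seq mu b k | k <- iota l (n - l)].
have pi0 : \prod_(m <- s) (b - m) != 0.
  rewrite prodf_seq_neq0; apply/allP => m /mapP[k]; rewrite mem_iota subnKC ?(ltnW ln) //.
  move=> /andP[lk kn] ->; rewrite /= subr_eq0; apply/eqP => E.
  have := mu_inj b0 n0 kn; rewrite mu0 => /(_ E) k0.
  by move: lk l0; rewrite -k0; lia.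
have : Pg s x = 0.
  rewrite Ex (big_morph _ (Pg_add s) (Pg0 s)) big1 // => i _.
  have isz : (i < n)%N by apply: (leq_trans (ltn_ord i)); rewrite /Zs size_map size_iota.
  rewrite in_tupleE Zs_nth // Z_scale Z_add !Pg_scale.
  case: (ltnP (i + l) n) => il.
  - rewrite (Pg_eig _ (Z_G Gx _)) prod_zero ?scale0r ?scaler0 //.
    by apply: map_f; rewrite mem_iota subnKC ?(ltnW ln) // il leq_addl.
  - by rewrite (Z_big Zn0 il) Pg0 !scaler0.
rewrite (Pg_eig _ Gx) => /eqP; rewrite scaler_eq0 (negPf pi0) (negPf x0) //.
Qed.

End G.

Lemma iter_eig (K : fieldType) (V : vectType K) (f : 'End(V)) (x : V) (a : K) :
  f x = a *: x -> forall k, iter k f x = a ^+ k *: x.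
Proof.
move=> Hx; elim=> [|k IH] /=; first by rewrite scale1r.
by rewrite IH linearZ /= Hx scalerA exprSr.
Qed.


Theorem corollary3p20 (K : closedFieldType) (K_char0 : [pchar K] =i pred0)
  (n w : nat) (n_gt0 : (0 < n)%N) (w_gt0 : (0 < w)%N)
  (gamma : K) (gamma_prim : n.-primitive_root gamma)
  (V : vectType K) (M : YDdata V)
  (HYD : is_YDmodule n w gamma M) (Hsimple : YD_simple n M)
  (p : nat) (Hdim : \dim {:V} = p.+1)
  (v : V) (alpha beta : K) (r i : int)
  (Hv : standard n M v alpha beta (gl n w r i, 0%N)) :
  forall u : V, (exists (a b : K) (h : bas), standard n M u a b h) ->
  exists lambda : K, lambda != 0 /\ u = lambda *: v.
Proof.
move=> u [a [b [h' [[u0 gh' a0 b0] [Xu Gu Cu]]]]].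
case: Hv => [[v0 gh al0 be0] [Xv Gv Cv]].
have HYD' := HYD.
case: HYD' => Hmod Hcom Hcomp.
have Fv := span_full n_gt0 gamma_prim Hmod Hcomp Hsimple v0 al0 Xv Gv Cv.
have uin : u \in <<Zs n M v>>%VS by rewrite Fv memvf.
have [l [d [ln Eu]]] := decomp n_gt0 gamma_prim Hmod be0 Gv uin Gu u0.
have d0 : d != 0 by apply/negP => /eqP d0; move: u0; rewrite Eu d0 scale0r eqxx.
case: (posnP l) => [l0|lpos].
  by exists d; split => //; rewrite Eu l0.
have n1 : (1 < n)%N by apply: leq_ltn_trans lpos ln.
case: (eqVneq (beta ^+ n) 1) => bn.
  have aw : alpha ^+ w = 1.
    case: (Hmod v) => [_ [_ _ Hgx]].
    move: Hgx; rewrite (iter_eig Gv) (iter_eig Xv) bn scale1r => /esym/eqP.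
    rewrite -subr_eq0 -{2}(scale1r v) -scalerBl scaler_eq0 (negPf v0) orbF subr_eq0.
    by move/eqP.
  have Zn0 : Z M v n = 0 by rewrite (Zn Hmod Xv) aw subrr scale0r.
  have Xu' : opX M u = alpha *: u by rewrite Eu linearZ /= (Z_X Hmod Xv) scalerA mulrC -scalerA.
  have Fu := span_full n_gt0 gamma_prim Hmod Hcomp Hsimple u0 a0 Xu Gu Cu.
  have vin : v \in <<Zs n M u>>%VS by rewrite Fu memvf.
  exfalso; apply: (no_other n_gt0 gamma_prim Hmod v0 be0 Gv Zn0 _ Eu vin).
  by rewrite lpos ln.
have gn := prim_expr_order gamma_prim.
have h2 : (gl n w r i, 0%N).2 = 0%N by [].
have [f [k [k0 f2 _ Heq]]] := Inv_iter n1 gn bn Gv v0 HYD h2 Cv ln.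
exfalso.
have := Cu f; rewrite Eu linearZ /= -/(Z M v l) Heq // eqxx.
have -> : (f == h') = false.
  apply/negP => /eqP E; move: gh'; rewrite /grouplike -E f2 => /andP[_].
  by rewrite eqn0Ngt lpos.
move/eqP; rewrite scalerA scaler_eq0 mulf_eq0 (negPf d0) (negPf k0) (negPf v0).
by [].
Qed.
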